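(* Let $L\subset\mathbb{Z}^3$ be the sublattice generated by $(4,0,0),(0,2,0),(0,0,2)$, and let $I\subset\mathbb{B}[x_1^{\pm1},x_2^{\pm1},x_3^{\pm1}]$ be the zero-dimensional tropical ideal of degree $2$ corresponding to $L$, i.e. the tropical ideal whose polynomials of minimal support are the binomials $\mathbf x^{\mathbf u}\oplus\mathbf x^{\mathbf v}$ with $\mathbf u\ne\mathbf v$, $\mathbf u-\mathbf v\in L$, and the trinomials $\mathbf x^{\mathbf u}\oplus\mathbf x^{\mathbf v}\oplus\mathbf x^{\mathbf w}$ with $\mathbf u,\mathbf v,\mathbf w$ lying in three distinct cosets of $L$. Then $I$ is not realizable: there is no field $K$ and ideal $J\subset K[x_1^{\pm1},x_2^{\pm1},x_3^{\pm1}]$ with $I=\operatorname{trop}(J)$.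
   Context: $\mathbb{B}=\{\infty,0\}$ with $\oplus=\min$ and multiplication $+$. For a field $K$ and $F\in K[x_1^{\pm1},\dots,x_n^{\pm1}]$, $\operatorname{trop}(F)=\bigoplus_{\mathbf u\in\operatorname{supp}(F)}\mathbf x^{\mathbf u}\in\mathbb{B}[x_1^{\pm1},\dots,x_n^{\pm1}]$, and for an ideal $J$, $\operatorname{trop}(J)$ is the ideal generated by $\{\operatorname{trop}(F):F\in J\}$. A tropical ideal is realizable if it equals $\operatorname{trop}(J)$ for some field $K$ and ideal $J$ over $K$. *)

(* Defs.v *)
From HB Require Import structures.
From mathcomp Require Import all_boot all_order all_algebra.
From mathcomp Require Import finmap.

Set Implicit Arguments.
Unset Strict Implicit.
Unset Printing Implicit Defensive.

Import Order.TTheory GRing.Theory Num.Theory.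
Local Open Scope ring_scope.

Definition Z3 := 'rV[int]_3.

Definition laurent (K : fieldType) := {fsfun Z3 -> K with 0}.

Section Laurent.
Variable K : fieldType.

Definition lzero : laurent K := [fsfun].

Definition ladd (F G : laurent K) : laurent K :=
  [fsfun w in (finsupp F `|` finsupp G)%fset => (F w + G w)%R | 0%R].

Definition lmul (F G : laurent K) : laurent K :=
  [fsfun w in [fset (u + v)%R | u in finsupp F, v in finsupp G]%fset =>
     (\sum_(u <- finsupp F) F u * G (w - u))%R | 0%R].

Definition is_ideal (J : laurent K -> Prop) : Prop :=
  [/\ J lzero,
      (forall F G, J F -> J G -> J (ladd F G)) &
      (forall H F, J F -> J (lmul H F))].

Definition supp (F : laurent K) : {fset Z3} := finsupp F.
End Laurent.

(* An element of B[x1^{±1},x2^{±1},x3^{±1}] (B = {oo,0}) is determined by its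
   support: the finite set of exponents whose coefficient is 0 (= the
   multiplicative unit); oo is the zero.  Thus tropical addition (min) is union
   of supports and tropical multiplication (+) is the Minkowski sum. *)
Definition Bpoly := {fset Z3}.

Definition Badd (f g : Bpoly) : Bpoly := (f `|` g)%fset.
Definition Bmul (f g : Bpoly) : Bpoly := [fset (u + v)%R | u in f, v in g]%fset.
Definition Bzero : Bpoly := fset0.

Definition trop (K : fieldType) (F : laurent K) : Bpoly := supp F.

Definition Bideal_gen (G : Bpoly -> Prop) (f : Bpoly) : Prop :=
  exists s : seq (Bpoly * Bpoly),
    (forall p, p \in s -> G p.2) /\
    f = \big[Badd/Bzero]_(p <- s) Bmul p.1 p.2.

Definition trop_ideal (K : fieldType) (J : laurent K -> Prop) (f : Bpoly) : Prop :=
  Bideal_gen (fun g => exists F, J F /\ g = trop F) f.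

Definition e1 : Z3 := \row_(i < 3) (if i == 0%N :> nat then 4 else 0).
Definition e2 : Z3 := \row_(i < 3) (if i == 1%N :> nat then 2 else 0).
Definition e3 : Z3 := \row_(i < 3) (if i == 2%N :> nat then 2 else 0).

Definition inL (v : Z3) : Prop :=
  exists a b c : int, v = a *: e1 + b *: e2 + c *: e3.

(* supports of the minimal-support polynomials (circuits) of I *)
Definition circuit (C : Bpoly) : Prop :=
  (exists u v : Z3, u != v /\ inL (u - v) /\ C = [fset u; v]%fset) \/
  (exists u v w : Z3, ~ inL (u - v) /\ ~ inL (u - w) /\ ~ inL (v - w) /\
                      C = [fset u; v; w]%fset).

(* The tropical ideal I: over B, the elements of a tropical ideal are exactly
   the (finite) unions of its minimal-support elements (the vectors of the
   associated matroid); the empty union is the zero polynomial oo. *)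
Definition I_L (f : Bpoly) : Prop :=
  exists s : seq Bpoly, (forall C, C \in s -> circuit C) /\
    f = \big[Badd/Bzero]_(C <- s) C.

Definition realizable (I : Bpoly -> Prop) : Prop :=
  exists (K : fieldType) (J : laurent K -> Prop),
    is_ideal J /\ (forall f, trop_ideal J f <-> I f).

(* Main.v *)
From HB Require Import structures.
From mathcomp Require Import all_boot all_order all_algebra.
From mathcomp Require Import finmap.
From mathcomp Require Import ring.
Require Import Defs.
Set Implicit Arguments.
Unset Strict Implicit.
Unset Printing Implicit Defensive.
Import Order.TTheory GRing.Theory Num.Theory.
Local Open Scope fset_scope.
Local Open Scope ring_scope.

Section L.
Variable K : fieldType.

Lemma laddE (F G : laurent K) w : ladd F G w = F w + G w.
Proof.
rewrite /ladd fsfunE inE !mem_finsupp.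
case: ifP => //; move/negbT; rewrite negb_or !negbK => /andP[/eqP-> /eqP->].
by rewrite addr0.
Qed.

Definition mono (c : K) (a : Z3) : laurent K := [fsfun w in [fset a] => c | 0].

Lemma monoE c a w : mono c a w = if w == a then c else 0.
Proof. by rewrite /mono fsfunE inE. Qed.

Lemma finsupp_mono c a : finsupp (mono c a) = if c == 0 then fset0 else [fset a].
Proof.
apply/fsetP => x; rewrite mem_finsupp monoE.
case: (c =P 0) => [->|/eqP c0]; first by rewrite inE; case: ifP => _; rewrite ?eqxx.
by rewrite inE; case: (x == a) => //; rewrite eqxx.
Qed.

Lemma lmul_monoE c a (F : laurent K) w : lmul (mono c a) F w = c * F (w - a).
Proof.
rewrite /lmul fsfunE finsupp_mono.
case: (c =P 0) => [->|/eqP c0]; first by rewrite mul0r; case: ifP => // _; rewrite big_seq_fset0.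
case: ifP => [_|/negbT H].
  by rewrite big_seq_fset1 monoE eqxx.
have -> : F (w - a) = 0; last by rewrite mulr0.
apply/eqP; rewrite -[_ == 0]negbK -mem_finsupp; apply/negP => Hw.
apply/negP: H; apply/negPn/imfset2P; exists a; first by rewrite inE.
by exists (w - a) => //; rewrite addrC subrK.
Qed.
Lemma in_bigBadd (T : eqType) (s : seq T) (g : T -> Bpoly) x :
  x \in \big[Badd/Bzero]_(p <- s) g p <-> exists2 p, p \in s & x \in g p.
Proof.
elim: s => [|p s IH]; first by rewrite big_nil inE; split => // [[]].
rewrite big_cons /Badd inE; split.
  case/orP => [H|/IH [q qs H]]; first by exists p; rewrite ?inE ?eqxx.
  by exists q; rewrite // inE qs orbT.
move=> [q]; rewrite inE => /orP[/eqP->|qs] H; first by rewrite H.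
by apply/orP; right; apply/IH; exists q.
Qed.

Lemma IL_circ f x : I_L f -> x \in f -> exists C, [/\ circuit C, x \in C & C `<=` f].
Proof.
move=> [s [Hs ->]] /in_bigBadd [C Cs xC]; exists C; split => //; first exact: Hs.
by apply/fsubsetP => y yC; apply/in_bigBadd; exists C.
Qed.
Lemma inL0 : inL 0.
Proof. by exists 0, 0, 0; rewrite !scale0r !addr0. Qed.

Lemma inLN a b : inL (a - b) -> inL (b - a).
Proof.
move=> [x [y [z H]]]; exists (-x), (-y), (-z).
by rewrite -opprB H !opprD -!scaleNr.
Qed.

Lemma inL_coord v : inL v -> (4 %| v ord0 ord0)%Z /\ (2 %| v ord0 (@Ordinal 3 1 isT))%Z.
Proof.
move=> [x [y [z ->]]]; rewrite !mxE /=; rewrite !mulr0 !addr0 ?add0r.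
by split; apply: dvdz_mull.
Qed.


Lemma L1 C p q : circuit C -> C `<=` [fset p; q] -> [/\ p \in C, q \in C & inL (p - q)].
Proof.
case => [[u [v [uv [Luv ->]]]] | [u [v [w [Huv [Huw [Hvw ->]]]]]]] /fsubsetP sub.
  move: uv Luv; have := sub u; have := sub v; rewrite !inE !eqxx ?orbT.
  move=> /(_ isT)/orP[]/eqP-> /(_ isT)/orP[]/eqP->; rewrite ?eqxx // => _ H;
   split; rewrite ?inE ?eqxx ?orbT //; by [|apply: inLN].
move: Huv Huw Hvw; have := sub u; have := sub v; have := sub w; rewrite !inE !eqxx ?orbT.
by move=> /(_ isT)/orP[]/eqP-> /(_ isT)/orP[]/eqP-> /(_ isT)/orP[]/eqP->;
  rewrite ?subrr => Huv Huw Hvw; exfalso; first [by apply: Huv; apply: inL0 | by apply: Huw; apply: inL0 | by apply: Hvw; apply: inL0].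
Qed.

Lemma in3 (x p q r : Z3) : x \in [fset p; q; r] -> [\/ x = p, x = q | x = r].
Proof. by rewrite !inE => /orP[/orP[]|]/eqP->; [apply: Or31|apply: Or32|apply: Or33]. Qed.

Lemma L2 C p q r : circuit C -> C `<=` [fset p; q; r] ->
  ~ inL (p - q) -> ~ inL (p - r) -> ~ inL (q - r) -> [/\ p \in C, q \in C & r \in C].
Proof.
move=> + /fsubsetP sub Hpq Hpr Hqr.
case => [[u [v [uv [Luv E]]]] | [u [v [w [Huv [Huw [Hvw E]]]]]]]; subst C.
  have hu : u \in [fset p; q; r] by apply: sub; rewrite !inE eqxx.
  have hv : v \in [fset p; q; r] by apply: sub; rewrite !inE eqxx ?orbT.
  move: uv Luv; move: hu hv.
  move=> /in3[]-> /in3[]->; rewrite ?eqxx // => _ Luv;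
   exfalso; by [apply: Hpq | apply: Hpr | apply: Hqr | apply: Hpq; apply: inLN
     | apply: Hpr; apply: inLN | apply: Hqr; apply: inLN].
have hu : u \in [fset p; q; r] by apply: sub; rewrite !inE eqxx.
have hv : v \in [fset p; q; r] by apply: sub; rewrite !inE eqxx ?orbT.
have hw : w \in [fset p; q; r] by apply: sub; rewrite !inE eqxx ?orbT.
move: Huv Huw Hvw; move: hu hv hw.
move=> /in3[]-> /in3[]-> /in3[]->;
  rewrite ?inE ?eqxx ?orbT // ?subrr => Huv Huw Hvw; exfalso;
  first [by apply: Huv; apply: inL0 | by apply: Huw; apply: inL0 | by apply: Hvw; apply: inL0].
Qed.

Definition vd : Z3 := \row_(i < 3) (if i == 0%N :> nat then 1 else 0).
Definition vb : Z3 := \row_(i < 3) (if i == 1%N :> nat then 1 else 0).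
Definition vA : Z3 := vd + vd.

Lemma nL_0d : ~ inL (0 - vd).
Proof. by move/inL_coord => []; rewrite !mxE /=. Qed.
Lemma nL_0b : ~ inL (0 - vb).
Proof. by move/inL_coord => []; rewrite !mxE /=. Qed.
Lemma nL_db : ~ inL (vd - vb).
Proof. by move/inL_coord => []; rewrite !mxE /=. Qed.
Lemma nL_0A : ~ inL (0 - vA).
Proof. by move/inL_coord => []; rewrite !mxE /=. Qed.
Lemma nL_Ab : ~ inL (vA - vb).
Proof. by move/inL_coord => []; rewrite !mxE /=. Qed.

Lemma L_b2 : inL (0 - (vb + vb)).
Proof.
exists 0, (-1), 0; apply/rowP => i; rewrite !mxE.
by case: i => [[|[|[|]]]] //=.
Qed.
Lemma L_A2 : inL (0 - (vA + vA)).
Proof.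
exists (-1), 0, 0; apply/rowP => i; rewrite !mxE.
by case: i => [[|[|[|]]]] //=.
Qed.

Lemma ne_b2 : (0 : Z3) != vb + vb.
Proof. by apply/eqP => /rowP /(_ (@Ordinal 3 1 isT)); rewrite !mxE. Qed.
Lemma ne_A2 : (0 : Z3) != vA + vA.
Proof. by apply/eqP => /rowP /(_ ord0); rewrite !mxE. Qed.
Lemma ne_A : (vA == 0) = false.
Proof. by apply/negP => /eqP /rowP /(_ ord0); rewrite !mxE. Qed.
Definition dl (w p : Z3) : K := (w == p)%:R.

Lemma dl_sh w a p : dl (w - a) p = dl w (p + a).
Proof. by rewrite /dl subr_eq. Qed.

Section Real.
Variable J : laurent K -> Prop.
Hypothesis HJ : is_ideal J.
Hypothesis HI : forall f, trop_ideal J f <-> I_L f.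

Lemma J_shift c a F : J F -> J (lmul (mono c a) F).
Proof. by case: HJ => _ _; apply. Qed.

Lemma J_add F G : J F -> J G -> J (ladd F G).
Proof. by case: HJ => _ Ha _; apply: Ha. Qed.

Lemma J_IL F : J F -> I_L (supp F).
Proof.
move=> JF; apply/HI; exists [:: ([fset 0], supp F)]; split.
  by move=> p; rewrite inE => /eqP-> /=; exists F.
rewrite big_cons big_nil /Badd /Bmul /Bzero /=; apply/fsetP => x.
rewrite [in RHS]inE in_fset0 orbF; apply/idP/imfset2P.
  by move=> xF; exists 0; rewrite ?inE //; exists x => //; rewrite add0r.
by move=> [u]; rewrite inE => /eqP-> [v vF ->]; rewrite add0r.
Qed.

Lemma circ_J C : circuit C -> exists F, [/\ J F, supp F `<=` C & exists x, x \in supp F].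
Proof.
move=> Cc.
have [x xC] : exists x, x \in C.
  by case: Cc => [[u [v [_ [_ ->]]]]|[u [v [w [_ [_ [_ ->]]]]]]]; exists u; rewrite !inE eqxx.
have /HI [s [Hs E]] : I_L C by exists [:: C]; split; [move=> C'; rewrite inE => /eqP-> | rewrite big_cons big_nil /Badd fsetU0].
have : x \in \big[Badd/Bzero]_(p <- s) Bmul p.1 p.2 by rewrite -E.
move/in_bigBadd => [p ps /imfset2P [a ap [y yF xE]]].
have [F [JF Fp]] := Hs p ps.
have sub : Bmul p.1 p.2 `<=` C by rewrite E; apply/fsubsetP => z zp; apply/in_bigBadd; exists p.
exists (lmul (mono 1 a) F); split; first exact: J_shift.
  apply/fsubsetP => z; rewrite /supp mem_finsupp lmul_monoE mul1r => Hz.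
  apply: (fsubsetP sub); apply/imfset2P; exists a => //; exists (z - a).
    by rewrite Fp /trop /supp mem_finsupp.
  by rewrite addrC subrK.
exists x; rewrite /supp mem_finsupp lmul_monoE mul1r xE /= [a + _]addrC addrK.
by move: yF; rewrite Fp /trop /supp mem_finsupp.
Qed.

Lemma bin p q : p != q -> inL (p - q) -> exists F, [/\ J F,
   (forall w, F w = F p * dl w p + F q * dl w q) & F q != 0].
Proof.
move=> pq Lpq.
have /circ_J [F [JF sub [x xF]]] : circuit [fset p; q] by left; exists p, q.
have [C [Cc xC CF]] := IL_circ (J_IL JF) xF.
have [pC qC _] := L1 Cc (fsubset_trans CF sub).
have pF := fsubsetP CF p pC; have qF := fsubsetP CF q qC.
exists F; split => //; last by rewrite -mem_finsupp.
move=> w; rewrite /dl; case: (w =P p) => [->|/eqP wp].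
  by rewrite (negPf pq) mulr1 mulr0 addr0.
case: (w =P q) => [->|/eqP wq]; first by rewrite mulr1 mulr0 add0r.
rewrite !mulr0 addr0; apply/eqP; rewrite -[_ == 0]negbK -mem_finsupp; apply/negP => wF.
by have := fsubsetP sub w wF; rewrite !inE (negPf wp) (negPf wq).
Qed.

Lemma tri p q r : ~ inL (p - q) -> ~ inL (p - r) -> ~ inL (q - r) -> exists F, [/\ J F,
   (forall w, F w = F p * dl w p + F q * dl w q + F r * dl w r),
   F p != 0, F q != 0 & F r != 0].
Proof.
move=> Lpq Lpr Lqr.
have dif a c : ~ inL (a - c) -> (a == c) = false.
  by move=> H; apply/negP => /eqP E; apply: H; rewrite E subrr; apply: inL0.
have /circ_J [F [JF sub [x xF]]] : circuit [fset p; q; r] by right; exists p, q, r.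
have [C [Cc xC CF]] := IL_circ (J_IL JF) xF.
have [pC qC rC] := L2 Cc (fsubset_trans CF sub) Lpq Lpr Lqr.
have pF := fsubsetP CF p pC; have qF := fsubsetP CF q qC; have rF := fsubsetP CF r rC.
exists F; split => //; try by rewrite -mem_finsupp.
move=> w; rewrite /dl; case: (w =P p) => [->|/eqP wp].
  by rewrite (dif _ _ Lpq) (dif _ _ Lpr) mulr1 !mulr0 !addr0.
case: (w =P q) => [->|/eqP wq].
  by rewrite (dif _ _ Lqr) mulr1 !mulr0 addr0 add0r.
case: (w =P r) => [->|/eqP wr]; first by rewrite mulr1 !mulr0 !add0r.
rewrite !mulr0 !addr0; apply/eqP; rewrite -[_ == 0]negbK -mem_finsupp; apply/negP => wF.
by have := fsubsetP sub w wF; rewrite !inE (negPf wp) (negPf wq) (negPf wr).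
Qed.

Lemma compute (T B : laurent K) (u b : Z3) (t0 t1 t2 b0 b1 : K) :
  (forall w, T w = t0 * dl w 0 + t1 * dl w u + t2 * dl w b) ->
  (forall w, B w = b0 * dl w 0 + b1 * dl w (b + b)) -> b1 != 0 -> J T -> J B ->
  exists P, J P /\ forall w, P w =
    (t0 ^+ 2 + t2 ^+ 2 * b0 / b1) * dl w 0 + 2 * t0 * t1 * dl w u + t1 ^+ 2 * dl w (u + u).
Proof.
move=> HT HB b10 JT JB.
exists (ladd (ladd (ladd (lmul (mono t0 0) T) (lmul (mono t1 u) T)) (lmul (mono (- t2) b) T))
  (lmul (mono (t2 ^+ 2 / b1) 0) B)); split.
  by apply: J_add; [apply: J_add; [apply: J_add|]|]; apply: J_shift.
move=> w; rewrite !laddE !lmul_monoE !HT !HB !dl_sh !addr0 !add0r (addrC b u).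
field.
exact: b10.
Qed.

Lemma contra (F : laurent K) c e : J F -> (forall w, F w = c * dl w 0 + e * dl w vA) ->
  e != 0 -> False.
Proof.
move=> JF HF e0.
have AF : vA \in supp F by rewrite /supp mem_finsupp HF /dl ne_A eqxx mulr0 mulr1 add0r.
have [C [Cc _ CF]] := IL_circ (J_IL JF) AF.
have sub : supp F `<=` [fset 0; vA].
  apply/fsubsetP => w; rewrite /supp mem_finsupp HF /dl !inE.
  by case: (w == 0); case: (w == vA); rewrite ?orbT // !mulr0 addr0 eqxx.
by have [_ _ /nL_0A] := L1 Cc (fsubset_trans CF sub).
Qed.

End Real.
End L.

Lemma alg (K : fieldType) (c t1 g0 g1 x0 x1 x2 e : K) : g1 != 0 ->
  - (t1 ^+ 2) / g1 * (g0 * x0 + g1 * x2) + (c * x0 + e * x1 + t1 ^+ 2 * x2) =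
  (c - t1 ^+ 2 / g1 * g0) * x0 + e * x1.
Proof. by move=> g10; field. Qed.

Theorem mainTheorem12 : ~ realizable I_L.
Proof.
move=> [K [J [HJ HI]]].
have [B [JB HB B0]] := bin HJ HI ne_b2 L_b2.
case: (eqVneq (2%:R : K) 0) => [h2|h2].
  have [T [JT HT T0 T1 T2]] := tri HJ HI nL_0d nL_0b nL_db.
  have [P [JP HP]] := compute HJ HT HB B0 JT JB.
  apply: (@contra K J HI P _ (T vd ^+ 2) JP); last by rewrite expf_neq0.
  by move=> w; rewrite HP h2 !mul0r addr0.
have [T [JT HT T0 T1 T2]] := tri HJ HI nL_0A nL_0b nL_Ab.
have [P [JP HP]] := compute HJ HT HB B0 JT JB.
have [B' [JB' HB' B0']] := bin HJ HI ne_A2 L_A2.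
have JP' := J_add HJ (J_shift HJ (- (T vA ^+ 2) / B' (vA + vA)) 0 JB') JP.
apply: (@contra K J HI _ _ (2 * T 0 * T vA) JP'); last by rewrite !mulf_neq0.
move=> w; rewrite laddE lmul_monoE HP subr0 (HB' w).
exact: alg.
Qed.
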